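(* Let $x,y\in S_n$ and let $M$ be the $2\times n$ matrix with rows $x$ and $y$. Suppose every column of $M$ is one of $(1,1)^T,(1,-1)^T,(1,0)^T,(0,1)^T,(0,0)^T$, occurring $a_1,a_2,b_1,b_2,c$ times respectively ($a_1+a_2+b_1+b_2+c=n$). Then $$|\mathrm{Elim}(\{x\})\cap\mathrm{Elim}(\{y\})|=3^c\big(2^{b_1+b_2}(2^{a_1}+2^{a_2})-2^{b_1+1}-2^{b_2+1}+2\big)$$ and $$|\mathrm{Elim}(\{x,y\})|=3^c\big(3^{b_1}2^{a_1+a_2+b_2}+3^{b_2}2^{a_1+a_2+b_1}-2^{b_1+b_2}(2^{a_1}+2^{a_2})-3^{b_1}-3^{b_2}+2^{b_1+1}+2^{b_2+1}-2\big).$$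
   Context: $S_n$ is the set of all nonzero $n$-tuples in $\{-1,0,1\}^n$ whose first nonzero entry equals $1$. A tuple $t=(t_1,\dots,t_n)\in\{1,0,-1,u\}^n$ ($u$ a formal symbol) eliminates $s\in S_n$ if: (i) $t_i\neq0$ and $s_i\neq0$ for some $i$; (ii) there is $k\in\{+1,-1\}$ with $t_i=ks_i$ for all $i$ with $s_i\neq0$ and $t_i\neq0$; (iii) $s_i=0$ whenever $t_i=u$. For $X\subseteq S_n$, $\mathrm{Elim}(X)$ is the set of elements of $S_n$ eliminated by at least one element of $X$. *)

(* Defs.v *)
From HB Require Import structures.
From mathcomp Require Import all_boot all_order all_algebra.
Set Implicit Arguments. Unset Strict Implicit. Unset Printing Implicit Defensive.

Inductive trit := TNeg | TZero | TPos.

Definition trit_to_ord (x : trit) : 'I_3 :=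
  match x with TNeg => inord 0 | TZero => inord 1 | TPos => inord 2 end.
Definition ord_to_trit (i : 'I_3) : option trit :=
  match val i with 0 => Some TNeg | 1 => Some TZero | 2 => Some TPos | _ => None end.
Lemma tritK : pcancel trit_to_ord ord_to_trit.
Proof. by case; rewrite /ord_to_trit /= inordK. Qed.
HB.instance Definition _ := Finite.copy trit (pcan_type tritK).

Definition tval (x : trit) : int :=
  match x with TNeg => (-1)%R | TZero => 0%R | TPos => 1%R end.

Definition vec n := {ffun 'I_n -> trit}.
(* elements of {1,0,-1,u}^n : None stands for the formal symbol u *)
Definition uvec n := {ffun 'I_n -> option trit}.

Definition S_ (n : nat) : {set vec n} :=
  [set s : vec n | [exists i, s i != TZero] &&
     [forall i, ((s i != TZero) && [forall j : 'I_n, (j < i)%N ==> (s j == TZero)])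
                  ==> (s i == TPos)]].

Definition unz (a : option trit) : bool := a != Some TZero.

Definition eliminates n (t : uvec n) (s : vec n) : bool :=
  [&& [exists i, unz (t i) && (s i != TZero)],
      [exists k : bool,
         [forall i, ((s i != TZero) && unz (t i)) ==>
            match t i with
            | Some a => tval a == ((if k then 1 else -1) * tval (s i))%R
            | None => false
            end]]
    & [forall i, (t i == None) ==> (s i == TZero)]].

Definition Elim n (X : {set uvec n}) : {set vec n} :=
  [set s in S_ n | [exists t in X, eliminates t s]].

Definition emb n (s : vec n) : uvec n := [ffun i => Some (s i)].

Definition ElimS n (X : {set vec n}) : {set vec n} := Elim [set emb s | s in X].

Definition ncol n (x y : vec n) (a b : trit) : nat :=
  #|[set i : 'I_n | (x i == a) && (y i == b)]|.

(* Main.v *)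
Require Import Defs.
From HB Require Import structures.
From mathcomp Require Import all_boot all_order all_algebra.
From mathcomp Require Import ring.
Import GRing.Theory.
Local Open Scope ring_scope.
Set Implicit Arguments. Unset Strict Implicit.

Definition teqb (a b : trit) : bool :=
  match a, b with TNeg, TNeg | TZero, TZero | TPos, TPos => true | _, _ => false end.
Lemma teqE a b : (a == b) = teqb a b.
Proof. by case: a; case: b => //=; apply/eqP. Qed.
Lemma tritP : perm_eq (index_enum trit) [:: TNeg; TZero; TPos].
Proof. apply: uniq_perm; first exact: index_enum_uniq. by rewrite /= !inE !teqE. by case; rewrite mem_index_enum !inE !teqE. Qed.
Lemma card_trit (P : pred trit) : #|P| = (P TNeg + P TZero + P TPos)%N.
Proof. rewrite -sum1_card big_mkcond /= (perm_big _ tritP) !big_cons big_nil /=.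
rewrite !unfold_in addn0 addnA; by case: (P TNeg); case: (P TZero); case: (P TPos). Qed.
Lemma prod_trit (h : trit -> nat) : (\prod_(t : trit) h t = h TNeg * (h TZero * (h TPos * 1)))%N.
Proof. by rewrite (perm_big _ tritP) !big_cons big_nil. Qed.

Lemma oeq (a b : trit) : (Some a == Some b) = (a == b).
Proof. by apply/eqP/eqP => [[]|->]. Qed.

Definition tneg (a : trit) := match a with TNeg => TPos | TZero => TZero | TPos => TNeg end.
Definition smul (k : bool) a := if k then a else tneg a.
(* None: no constraint; Some None: zero on support; Some (Some k): sign k *)
Definition cst (m : option (option bool)) (a t : trit) : bool :=
  match m with
  | None => true
  | Some m' => (a == TZero) || (t == TZero) ||
               (if m' is Some k then t == smul k a else false)
  end.
Definition boxb n (m : option (option bool)) (x s : vec n) : bool :=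
  [forall i, cst m (x i) (s i)].
Definition ind (b : bool) : int := if b then 1 else 0.
Definition negv n (s : vec n) : vec n := [ffun i => tneg (s i)].

Lemma boxN n (x s : vec n) : boxb None x s.
Proof. by apply/forallP. Qed.

Lemma tvalE k (a b : trit) : (Defs.tval a == (if k then 1 else -1) * Defs.tval b) = (b == smul k a).
Proof. by case: k; case: a; case: b; rewrite /= teqE. Qed.

Lemma exE n (x s : vec n) : eliminates (emb x) s =
  ~~ boxb (Some None) x s && (boxb (Some (Some true)) x s || boxb (Some (Some false)) x s).
Proof.
rewrite /eliminates.
have -> : [forall i, (emb x i == None) ==> (s i == TZero)].
  by apply/forallP => i; rewrite ffunE.
rewrite andbT; congr (_ && _).
  rewrite /boxb negb_forall; apply: eq_existsb => i; rewrite ffunE /unz /=.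
  by case: (x i); case: (s i); rewrite /= ?oeq !teqE.
apply/existsP/orP.
  case=> k /forallP H; case: k H => H; [left|right]; apply/forallP => i; have := H i;
  rewrite /emb ffunE /unz /= ?oeq; by case: (x i); case: (s i); rewrite /= !teqE.
case=> H; [exists true|exists false]; apply/forallP => i; have := forallP H i;
  rewrite /emb ffunE /unz /= ?oeq; case: (x i); case: (s i); rewrite /= ?teqE //.
Qed.

Lemma ex_ind n (x s : vec n) : ind (eliminates (emb x) s) =
  \sum_(k : bool) (ind (boxb (Some (Some k)) x s) - ind (boxb (Some None) x s)).
Proof.
rewrite exE big_bool /=.
have ZG : forall k, boxb (Some None) x s -> boxb (Some (Some k)) x s.
  by move=> k /forallP H; apply/forallP => i; have := H i; rewrite /cst => /orP[->|] //.
have GG : ~~ boxb (Some None) x s -> boxb (Some (Some true)) x s ->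
          boxb (Some (Some false)) x s -> False.
  rewrite /boxb negb_forall => /existsP[i Hi] /forallP/(_ i) H1 /forallP/(_ i).
  by move: Hi H1; case: (x i); case: (s i); rewrite /= !teqE.
case Z: (boxb (Some None) x s).
  by rewrite !ZG //= subrr.
case T: (boxb (Some (Some true)) x s); case F: (boxb (Some (Some false)) x s) => //=.
by exfalso; apply: GG; rewrite ?Z ?T ?F.
Qed.

Lemma tnegK : involutive tneg. Proof. by case. Qed.
Lemma negvK n : involutive (@negv n).
Proof. by move=> s; apply/ffunP => i; rewrite !ffunE tnegK. Qed.

Lemma box_negS n k (x s : vec n) :
  boxb (Some (Some k)) x (negv s) = boxb (Some (Some (~~ k))) x s.
Proof.
apply: eq_forallb => i; rewrite ffunE /=.
by case: k; case: (x i); case: (s i); rewrite /= !teqE.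
Qed.
Lemma box_negZ n (x s : vec n) : boxb (Some None) x (negv s) = boxb (Some None) x s.
Proof.
apply: eq_forallb => i; rewrite ffunE /=.
by case: (x i); case: (s i); rewrite /= !teqE.
Qed.
Lemma ex_neg n (x s : vec n) : eliminates (emb x) (negv s) = eliminates (emb x) s.
Proof. by rewrite !exE !box_negS box_negZ /= orbC. Qed.

Lemma ex_nz n (x s : vec n) : eliminates (emb x) s -> [exists i, s i != TZero].
Proof.
case/and3P => /existsP[i /andP[_ H]] _ _; by apply/existsP; exists i.
Qed.

Definition firstnz n (s : vec n) (i : 'I_n) :=
  (s i != TZero) && [forall j : 'I_n, (j < i)%N ==> (s j == TZero)].

Lemma firstnz_ex n (s : vec n) : [exists i, s i != TZero] -> exists i, firstnz s i.
Proof.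
case/existsP=> i0 Hi0.
case: (@arg_minnP _ i0 (fun i => s i != TZero) (fun i : 'I_n => nat_of_ord i) Hi0) => i Hi Hmin.
exists i; rewrite /firstnz Hi /=; apply/forallP => j; apply/implyP => Hj.
move: Hj; apply: contraLR => Hsj; rewrite -leqNgt; exact: Hmin.
Qed.

Lemma firstnz_uniq n (s : vec n) i j : firstnz s i -> firstnz s j -> i = j.
Proof.
rewrite /firstnz => /andP[Hi Fi] /andP[Hj Fj].
have {}Fi := forallP Fi. have {}Fj := forallP Fj.
have H1 : (nat_of_ord i <= nat_of_ord j)%N.
  rewrite leqNgt; apply/negP => H.
  by move: (implyP (Fi j) H); rewrite (negbTE Hj).
have H2 : (nat_of_ord j <= nat_of_ord i)%N.
  rewrite leqNgt; apply/negP => H.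
  by move: (implyP (Fj i) H); rewrite (negbTE Hi).
have E : nat_of_ord i = nat_of_ord j by apply/eqP; rewrite eqn_leq H1 H2.
exact: ord_inj E.
Qed.

Lemma inS_first n (s : vec n) i : firstnz s i -> (s \in S_ n) = (s i == TPos).
Proof.
move=> Fi; rewrite inE.
have -> : [exists i, s i != TZero] by apply/existsP; exists i; case/andP: Fi.
apply/forallP/idP => [H|Hp j].
  by have := implyP (H i) Fi.
apply/implyP => Fj; by rewrite -(firstnz_uniq Fi Fj).
Qed.

Lemma firstnz_neg n (s : vec n) i : firstnz (negv s) i = firstnz s i.
Proof.
rewrite /firstnz ffunE; congr (_ && _).
  by case: (s i); rewrite /= !teqE.
apply: eq_forallb => j; rewrite ffunE; by case: (s j); rewrite /= !teqE.
Qed.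

Lemma negS n (s : vec n) : [exists i, s i != TZero] ->
  (negv s \in S_ n) = ~~ (s \in S_ n).
Proof.
case/firstnz_ex=> i Fi.
rewrite (inS_first Fi) (inS_first (i:=i)) ?firstnz_neg // ffunE.
by move: Fi; case/andP; case: (s i); rewrite /= !teqE.
Qed.

Lemma halving n (P : pred (vec n)) :
  (forall s, P (negv s) = P s) -> (forall s, P s -> [exists i, s i != TZero]) ->
  (2 * #|[set s in S_ n | P s]| = #|[set s | P s]|)%N.
Proof.
move=> Pneg Pnz.
move: (@negS n); move: (S_ n) => S negS.
rewrite -(cardsID S [set s | P s]).
have -> : [set s | P s] :&: S = [set s in S | P s].
  by apply/setP => s; rewrite !inE andbC.
have -> : [set s | P s] :\: S = (@negv n) @: [set s in S | P s].
  apply/setP => s; rewrite !inE; apply/andP/imsetP.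
    case=> Hs HP; exists (negv s); last by rewrite negvK.
    by rewrite inE negS ?Hs ?Pneg //; apply: Pnz.
  case=> t; rewrite inE => /andP[Ht HP] ->; split; last by rewrite Pneg.
  by rewrite negS ?Ht //; apply: Pnz.
rewrite card_imset; last exact: (can_inj (@negvK n)).
by rewrite mul2n addnn.
Qed.

Lemma card_ind n (P : pred (vec n)) : (#|[set s | P s]| : int) = \sum_s ind (P s).
Proof.
rewrite -sum1_card big_mkcond /= -natz natr_sum; apply: eq_bigr => s _.
by rewrite inE; case: (P s).
Qed.

Definition fcnt (m1 m2 : option (option bool)) (a b : trit) : nat :=
  #|[pred t | cst m1 a t && cst m2 b t]|.

Lemma foldr_prod (T : Type) (f : T -> nat) (s : seq T) :
  foldr muln 1%N (map f s) = (\prod_(i <- s) f i)%N.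
Proof. by elim: s => [|a s IH]; rewrite ?big_nil ?big_cons //= IH. Qed.

Lemma box_card n m1 m2 (x y : vec n) :
  #|[set s | boxb m1 x s && boxb m2 y s]| = (\prod_i fcnt m1 m2 (x i) (y i))%N.
Proof.
rewrite (@eq_card _ _ (family (fun i => [pred t | cst m1 (x i) t && cst m2 (y i) t]))).
  rewrite card_family foldr_prod big_enum /=. done.
move=> s; rewrite inE; apply/andP/familyP => [[/forallP H1 /forallP H2] i | H].
  by rewrite inE H1 H2.
by split; apply/forallP => i; have := H i; rewrite inE => /andP[].
Qed.

Definition colok n (x y : vec n) :=
  forall i : 'I_n,
     ((x i, y i) == (TPos, TPos)) || ((x i, y i) == (TPos, TNeg)) ||
     ((x i, y i) == (TPos, TZero)) || ((x i, y i) == (TZero, TPos)) ||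
     ((x i, y i) == (TZero, TZero)).

Lemma ncol0 n (x y : vec n) a b : colok x y ->
  ~~ [|| (a == TPos) && (b == TPos), (a == TPos) && (b == TNeg),
        (a == TPos) && (b == TZero), (a == TZero) && (b == TPos)
      | (a == TZero) && (b == TZero)] ->
  ncol x y a b = 0%N.
Proof.
move=> H Hab; apply: eq_card0 => i; rewrite inE.
apply/negP => /andP[/eqP Ea /eqP Eb]; move: (H i) Hab; rewrite Ea Eb !xpair_eqE.
by rewrite -!orbA => ->.
Qed.

Lemma prod_types n (x y : vec n) (f : trit -> trit -> nat) : colok x y ->
  (\prod_i f (x i) (y i) =
   f TPos TPos ^ ncol x y TPos TPos * f TPos TNeg ^ ncol x y TPos TNeg *
   f TPos TZero ^ ncol x y TPos TZero * f TZero TPos ^ ncol x y TZero TPos *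
   f TZero TZero ^ ncol x y TZero TZero)%N.
Proof.
move=> H.
rewrite (partition_big (fun i => (x i, y i)) predT) //=.
rewrite (eq_bigr (fun j => f j.1 j.2 ^ ncol x y j.1 j.2)%N); last first.
  move=> [a b] _ /=.
  rewrite (eq_bigr (fun _ => f a b)); last by move=> i /eqP [-> ->].
  rewrite -prod_nat_const; apply: eq_bigl => i; by rewrite inE xpair_eqE.
rewrite -(pair_big predT predT (fun a b => f a b ^ ncol x y a b)%N) /=.
rewrite !prod_trit.
rewrite !(@ncol0 n x y TNeg) ?(@ncol0 n x y TZero TNeg) //= ?teqE //.
rewrite !expn0 !mul1n !muln1; ring.
Qed.

Lemma indM a b : ind (a && b) = ind a * ind b.
Proof. by case: a; case: b; rewrite /= ?mulr1 ?mulr0. Qed.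
Lemma indO a b : ind (a || b) = ind a + ind b - ind a * ind b.
Proof. by case: a; case: b; rewrite /= ?mulr1 ?mulr0 ?subr0 ?addr0 ?add0r ?subrr. Qed.

Definition mode := option (option bool).
Definition terms := seq (int * (mode * mode)).

Lemma sum_lin n (x y : vec n) (L : terms) (P : pred (vec n)) :
  (forall s, ind (P s) = \sum_(j <- L) j.1 * ind (boxb j.2.1 x s && boxb j.2.2 y s)) ->
  (#|[set s | P s]| : int) =
  \sum_(j <- L) j.1 * (#|[set s | boxb j.2.1 x s && boxb j.2.2 y s]| : int).
Proof.
move=> H; rewrite card_ind (eq_bigr _ (fun s _ => H s)) exchange_big /=.
by apply: eq_bigr => j _; rewrite card_ind mulr_sumr.
Qed.

Lemma box_int n m1 m2 (x y : vec n) : colok x y ->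
  (#|[set s | boxb m1 x s && boxb m2 y s]| : int) =
   (fcnt m1 m2 TPos TPos)%:R ^+ ncol x y TPos TPos * (fcnt m1 m2 TPos TNeg)%:R ^+ ncol x y TPos TNeg *
   (fcnt m1 m2 TPos TZero)%:R ^+ ncol x y TPos TZero * (fcnt m1 m2 TZero TPos)%:R ^+ ncol x y TZero TPos *
   (fcnt m1 m2 TZero TZero)%:R ^+ ncol x y TZero TZero.
Proof.
move=> H; rewrite box_card (prod_types (fcnt m1 m2) H) -natz.
by rewrite !natrM !natrX.
Qed.

Definition ST : mode := Some (Some true).
Definition SF : mode := Some (Some false).
Definition SN : mode := Some None.

Definition LI : terms :=
  [:: (1, (ST, ST)); (1, (ST, SF)); (1, (SF, ST)); (1, (SF, SF));
      (-2, (SN, ST)); (-2, (SN, SF)); (-2, (ST, SN)); (-2, (SF, SN)); (4, (SN, SN))].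
Definition LU : terms :=
  [:: (1, (ST, None)); (1, (SF, None)); (-2, (SN, None));
      (1, (None, ST)); (1, (None, SF)); (-2, (None, SN));
      (-1, (ST, ST)); (-1, (ST, SF)); (-1, (SF, ST)); (-1, (SF, SF));
      (2, (SN, ST)); (2, (SN, SF)); (2, (ST, SN)); (2, (SF, SN)); (-4, (SN, SN))].

Lemma pwI n (x y s : vec n) :
  ind (eliminates (emb x) s && eliminates (emb y) s) =
  \sum_(j <- LI) j.1 * ind (boxb j.2.1 x s && boxb j.2.2 y s).
Proof.
rewrite !big_cons big_nil /= /ST /SF /SN (indM (eliminates _ _)) !ex_ind !big_bool /= !indM.
ring.
Qed.

Lemma pwU n (x y s : vec n) :
  ind (eliminates (emb x) s || eliminates (emb y) s) =
  \sum_(j <- LU) j.1 * ind (boxb j.2.1 x s && boxb j.2.2 y s).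
Proof.
rewrite !big_cons big_nil /= /ST /SF /SN !boxN /= !andbT indO !ex_ind !big_bool /= !indM.
ring.
Qed.

Lemma ex1 n (x s : vec n) : [exists t in [set emb x], eliminates t s] = eliminates (emb x) s.
Proof.
apply/existsP/idP => [[t /andP[/set1P -> //]]|H].
by exists (emb x); rewrite in_set1 eqxx.
Qed.
Lemma ex2 n (x y s : vec n) : [exists t in [set emb x; emb y], eliminates t s] =
  eliminates (emb x) s || eliminates (emb y) s.
Proof.
apply/existsP/orP => [[t /andP[/set2P [->|->] H]]|[H|H]]; [by left|by right| |].
  by exists (emb x); rewrite in_set2 eqxx.
by exists (emb y); rewrite in_set2 eqxx orbT.
Qed.

Unset Implicit Arguments.

Theorem mainTheorem14 (n : nat) (x y : vec n) (a1 a2 b1 b2 c : nat) :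
  x \in S_ n -> y \in S_ n ->
  (forall i : 'I_n,
     ((x i, y i) == (TPos, TPos)) || ((x i, y i) == (TPos, TNeg)) ||
     ((x i, y i) == (TPos, TZero)) || ((x i, y i) == (TZero, TPos)) ||
     ((x i, y i) == (TZero, TZero))) ->
  a1 = ncol x y TPos TPos -> a2 = ncol x y TPos TNeg ->
  b1 = ncol x y TPos TZero -> b2 = ncol x y TZero TPos ->
  c = ncol x y TZero TZero ->
  ((#|ElimS [set x] :&: ElimS [set y]| : int) =
     3 ^+ c * (2 ^+ (b1 + b2) * (2 ^+ a1 + 2 ^+ a2) - 2 ^+ b1.+1 - 2 ^+ b2.+1 + 2))
  /\
  ((#|ElimS [set x; y]| : int) =
     3 ^+ c * (3 ^+ b1 * 2 ^+ (a1 + a2 + b2) + 3 ^+ b2 * 2 ^+ (a1 + a2 + b1)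
               - 2 ^+ (b1 + b2) * (2 ^+ a1 + 2 ^+ a2) - 3 ^+ b1 - 3 ^+ b2
               + 2 ^+ b1.+1 + 2 ^+ b2.+1 - 2)).
Proof.
move=> xS yS Hcol Ha1 Ha2 Hb1 Hb2 Hc; subst a1 a2 b1 b2 c.
have Hok : colok x y := Hcol.
have E1 : ElimS [set x] :&: ElimS [set y] =
   [set s in S_ n | eliminates (emb x) s && eliminates (emb y) s].
  apply/setP => s; rewrite /ElimS /Elim !imset_set1 !inE !ex1.
  by case: (eliminates (emb x) s); case: (eliminates (emb y) s); rewrite /= ?andbT ?andbF ?andbb.
have E2 : ElimS [set x; y] =
   [set s in S_ n | eliminates (emb x) s || eliminates (emb y) s].
  apply/setP => s; rewrite /ElimS /Elim imsetU1 imset_set1 !inE ex2 //.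
have H1 := @halving n (fun s => eliminates (emb x) s && eliminates (emb y) s).
have H2 := @halving n (fun s => eliminates (emb x) s || eliminates (emb y) s).
rewrite /= in H1 H2.
have {H1}H1 := H1 ltac:(by move=> s; rewrite !ex_neg) ltac:(by move=> s /andP[H _]; exact: ex_nz H).
have {H2}H2 := H2 ltac:(by move=> s; rewrite !ex_neg) ltac:(by move=> s /orP[H|H]; exact: ex_nz H).
move: H1 H2 => /(congr1 Posz) H1 /(congr1 Posz) H2.
rewrite (sum_lin (pwI x y)) in H1.
rewrite (sum_lin (pwU x y)) in H2.
rewrite !big_cons big_nil /= !box_int // /fcnt /ST /SF /SN !card_trit /= ?teqE /= in H1 H2.
have T1 : ((0 + 1 + 0)%:R : int) = 1 by [].
have T2 : ((0 + 1 + 1)%:R : int) = 2 by [].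
have T3 : ((1 + 1 + 0)%:R : int) = 2 by [].
have T4 : ((1 + 1 + 1)%:R : int) = 3 by [].
rewrite ?T1 ?T2 ?T3 ?T4 !expr1n PoszM in H1.
rewrite ?T1 ?T2 ?T3 ?T4 !expr1n PoszM in H2.
rewrite E1 E2 !exprD !exprS.
have two0 : (2 : int) != 0 by [].
split; apply: (mulfI two0); [rewrite H1|rewrite H2]; ring.
Qed.
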